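(* For integers $a\ge1$ and $d\ge-1$, \[ \operatorname*{Res}_{z=2}\frac{f_a(z)}{z^2(z-2)^d}\,\mathrm{d}z=\big(-\tfrac12\big)^{a+d+1}, \] where $f_a(z)=\big(-\frac{z(z-1)}{z-2}\frac{\mathrm{d}}{\mathrm{d}z}\big)^a\frac{2-2z}{z-2}$.
   Context: Equivalently, with $x=\frac{z-1}{z^2}$, $f_a(z)=\sum_{\mu\ge1}\binom{2\mu}{\mu}\mu^ax^\mu$; each $f_a$ is a rational function of $z$. *)

(* Defs.v *)
(* Rational functions are represented concretely as pairs
   (numerator, denominator) of polynomials over a number field R. *)
From HB Require Import structures.
From mathcomp Require Import all_boot all_order all_algebra.
Set Implicit Arguments. Unset Strict Implicit. Unset Printing Implicit Defensive.
Import Order.TTheory GRing.Theory Num.Theory.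
Local Open Scope ring_scope.

Section RatFun.
Variable R : numFieldType.

Definition ratf := ({poly R} * {poly R})%type.

Definition rmul (f g : ratf) : ratf := (f.1 * g.1, f.2 * g.2).

Definition rderiv (f : ratf) : ratf :=
  (f.1^`() * f.2 - f.1 * f.2^`(), f.2 ^+ 2).

Definition Dop (f : ratf) : ratf :=
  rmul (- ('X * ('X - 1)), 'X - 2%:P) (rderiv f).

Definition f_ (a : nat) : ratf := iter a Dop (2%:P - 2%:P * 'X, 'X - 2%:P).

(* (z-2)^(-d) as a rational function, for d : int *)
Definition invpow_zm2 (d : int) : ratf :=
  match d with
  | Posz n => (1, ('X - 2%:P) ^+ n)
  | Negz n => (('X - 2%:P) ^+ n.+1, 1)
  end.

(* Residue at z = c of the rational function p/q (q != 0): with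
   k = multiplicity of c as a root of q and q = (z-c)^k r,
   Res = 1/(k-1)! * (d/dz)^(k-1) (p/r) evaluated at c  (0 if k = 0). *)
Definition residue (c : R) (f : ratf) : R :=
  let k := mup c f.2 in
  let r := f.2 %/ ('X - c%:P) ^+ k in
  if k is k'.+1 then
    let g := iter k' rderiv (f.1, r) in
    (k'`!%:R)^-1 * (g.1.[c] / g.2.[c])
  else 0.

End RatFun.

(* Main.v *)
Require Import Defs.
From HB Require Import structures.
From mathcomp Require Import all_boot all_order all_algebra.
From mathcomp Require Import ring lra zify.
Import Order.TTheory GRing.Theory Num.Theory.
Local Open Scope ring_scope.

Lemma two_half (R : numFieldType) : (2 * 2^-1 - 1 : R) = 0.
Proof. by rewrite mulfV ?subrr // pnatr_eq0. Qed.

Lemma by_k (R : numFieldType) (x y k : {poly R}) :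
  x - y = k * (2 * 2^-1 - 1 : R)%:P -> x = y.
Proof. by rewrite two_half mulr0 => /eqP; rewrite subr_eq0 => /eqP. Qed.

Lemma sM (R : numFieldType) (p q : {poly R}) a b :
  (size p <= a)%N -> (size q <= b)%N -> (size (p * q)%R <= (a + b).-1)%N.
Proof. move=> ha hb; apply: leq_trans (size_polyMleq _ _) _; lia. Qed.

Lemma sD (R : numFieldType) (p q : {poly R}) a :
  (size p <= a)%N -> (size q <= a)%N -> (size (p + q)%R <= a)%N.
Proof. move=> ha hb; apply: leq_trans (size_polyD _ _) _; lia. Qed.

Lemma sB (R : numFieldType) (p q : {poly R}) a :
  (size p <= a)%N -> (size q <= a)%N -> (size (p - q)%R <= a)%N.
Proof. by move=> ha hb; apply: sD; rewrite ?size_polyN. Qed.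

Lemma sC (R : numFieldType) (c : R) : (size c%:P <= 1)%N.
Proof. exact: size_polyC_leq1. Qed.

Lemma sDer (R : numFieldType) (p : {poly R}) a :
  (size p <= a.+1)%N -> (size p^`() <= a)%N.
Proof.
have [->|p0] := eqVneq p 0; first by rewrite deriv0 size_poly0.
move=> h; have := lt_size_deriv p0; lia.
Qed.

Arguments sM {R p q a b}.
Arguments sD {R p q a}.
Arguments sB {R p q a}.
Arguments sC {R c}.
Arguments sDer {R p a}.

Lemma base_eq (R : numFieldType) :
  - ('X * ('X - 1)) * ((2%:P - 2%:P * 'X)^`() * ('X - 2%:P) - (2%:P - 2%:P * 'X) * ('X - 2%:P)^`())
  = (2 * (- 2^-1) ^+ 1)%:P * ('X * ('X - 2%:P) ^+ 1) + 'X^2 * -1 :> {poly R}.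
Proof. rewrite !derivE; apply: (@by_k _ _ _ ('X ^+ 2 - 2%:P * 'X)); ring. Qed.

Lemma dexp (R : numFieldType) (c : R) n :
  (('X - c%:P) ^+ n.+1)^`() = n.+1%:R * ('X - c%:P) ^+ n.
Proof. by rewrite deriv_exp derivXsubC mul1r mulr_natl. Qed.

Definition Snew (R : numFieldType) (a m : nat) (S : {poly R}) : {poly R} :=
  let c := (2 * (- 2^-1) ^+ a.+1 : R) in
  let w := 'X - 2%:P in
  let W := w ^+ m in
  let T := 2%:P * w * S + 'X * w * S^`() - m.+3%:R * 'X * S in
  c%:P * (W * W * w ^+ 3) * ((1 + 2^-1)%:P * 'X + (1 - 4 * 2^-1)%:P)
  - ('X - 1) * (W * w ^+ 2) * T.
Arguments Snew {R}.

Lemma step_eq (R : numFieldType) (a m : nat) (S : {poly R}) :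
  - ('X * ('X - 1)) *
   (((2 * (- 2^-1) ^+ a.+1)%:P * ('X * ('X - 2%:P) ^+ m.+1) + 'X^2 * S)^`() * ('X - 2%:P) ^+ m.+3
    - ((2 * (- 2^-1) ^+ a.+1)%:P * ('X * ('X - 2%:P) ^+ m.+1) + 'X^2 * S) * (('X - 2%:P) ^+ m.+3)^`())
  = (2 * (- 2^-1) ^+ a.+2)%:P * ('X * ('X - 2%:P) ^+ (m + m + 4).+1) + 'X^2 * Snew a m S.
Proof.
rewrite /Snew.
rewrite (dexp _ _ m.+2) derivD !derivM (dexp _ _ m) derivC derivX.

rewrite !exprS !exprD.

apply: (@by_k _ _ _ (2%:P * (2 * (- 2^-1 * (- 2^-1) ^+ a))%:P * 'X * (('X - 2%:P) ^+ m * ('X - 2%:P) ^+ m * ('X - 2%:P) ^+ 3))).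

ring.
Qed.

Lemma ring1 (P : comNzRingType) (a b b1 A w W Z' z : P) (m : nat) :
  (a * b + A * b1 + (m.+1%:R * W * Z' + w * W * z)) * A -
  (A * b + w * W * Z') * a =
  A ^+ 2 * b1 + W * ((m.+1%:R * Z' + w * z) * A - w * Z' * a).
Proof. ring. Qed.

Lemma iter_rd (R : numFieldType) (c : R) (r T : {poly R}) j : forall m (Z : {poly R}),
  exists Z' : {poly R}, iter j (@rderiv R) (r * T + ('X - c%:P) ^+ (j + m) * Z, r)
    = (r ^+ (2 ^ j) * T^`(j) + ('X - c%:P) ^+ m * Z', r ^+ (2 ^ j)).
Proof.
elim: j => [|j IH] m Z.
  by exists Z; rewrite /= expr1 ?derivn0.
have [Z' E] := IH m.+1 Z; have -> : (j.+1 + m = j + m.+1)%N by rewrite addSnnS.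
rewrite iterS E expnS mulnC exprM.
move: (r ^+ (2 ^ j) : {poly R}) => A.
exists ((m.+1%:R * Z' + ('X - c%:P) * Z'^`()) * A - ('X - c%:P) * Z' * A^`()).
rewrite /rderiv /=; congr (_, _).
rewrite derivD !derivM (deriv_exp ('X - c%:P)) derivXsubC mul1r /= exprS -mulr_natl.

exact: ring1.
Qed.

Lemma dwn (R : numFieldType) (c : R) k : (('X - c%:P) ^+ k)^`(k) = k`!%:R.
Proof.
elim: k => [|k IH]; first by rewrite expr0.
rewrite derivSn deriv_exp derivXsubC mul1r /= derivnMn IH factS natrM.
by rewrite mulr_natl.
Qed.

Lemma final_eval (R : numFieldType) (c t : R) (r V Z : {poly R}) k :
  r.[c] != 0 -> (size V <= k)%N ->
  let g := iter k (@rderiv R) (r * (t%:P * ('X - c%:P) ^+ k + V) + ('X - c%:P) ^+ (k + 1) * Z, r) in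
  g.1.[c] / g.2.[c] = t * k`!%:R.
Proof.
move=> rc sV /=.
have [Z' ->] := @iter_rd R c r (t%:P * ('X - c%:P) ^+ k + V) k 1 Z.
rewrite /= derivnD (derivn_poly0 sV) addr0 mul_polyC derivnZ dwn.
rewrite !hornerE subrr mul0r addr0 -polyC_natr hornerC.
move: (expf_neq0 (2 ^ k) rc); move: (r.[c] ^+ (2 ^ k)) => A hA.
change (A * t * k`!%:R / A = t * k`!%:R).
by field.
Qed.
Lemma U_ex (R : numFieldType) e : exists U : {poly R}, (size U <= e.+1)%N /\
  'X * U = 1 - ((- 2^-1) ^+ e.+1)%:P * ('X - 2%:P) ^+ e.+1.
Proof.
elim: e => [|e [U [sU hU]]].
  exists (2^-1)%:P; split; first by rewrite size_polyC leq_b1.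
  apply: (@by_k _ _ _ 1).
  by rewrite expr1; ring.
exists (U + (2^-1 * (-2^-1)^+e.+1)%:P * ('X - 2%:P) ^+ e.+1); split.
  rewrite (leq_trans (size_add _ _)) // geq_max (leq_trans sU) //=.
  by rewrite mul_polyC (leq_trans (size_scale_leq _ _)) // size_exp_XsubC.
rewrite mulrDr hU.
apply: (@by_k _ _ _ (((-2^-1)^+e.+1)%:P * ('X - 2%:P) ^+ e.+1)).
rewrite !exprS.
ring.
Qed.
Lemma fa_form (R : numFieldType) a : exists m (S : {poly R}),
  f_ R a.+1 = ((2 * (- 2^-1) ^+ a.+1)%:P * ('X * ('X - 2%:P) ^+ m.+1) + 'X ^+ 2 * S,
               ('X - 2%:P) ^+ m.+3) /\ (size S <= m.+1)%N.
Proof.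
elim: a => [|a [m [S [E sS]]]].
  exists 0%N, (-1); split; last by rewrite size_polyN size_poly1.
  rewrite /f_ /= /Dop /rmul /rderiv /=; congr (_, _).
  exact: base_eq.
exists (m + m + 4)%N, (Snew a m S); split.
  have ->: f_ R a.+2 = Dop (f_ R a.+1) by [].
  rewrite E /Dop /rmul /rderiv /=; congr (_, _).
    exact: step_eq.
  rewrite -exprM -exprS; congr (_ ^+ _); lia.
rewrite /Snew.
set w := ('X - 2%:P : {poly R}).
have sw k : (size (w ^+ k) <= k.+1)%N by rewrite size_exp_XsubC.
have sX : (size ('X : {poly R}) <= 2)%N by rewrite size_polyX.
have sn n : (size (n%:R : {poly R}) <= 1)%N by rewrite -polyC_natr sC.
have sX1 : (size ('X - 1 : {poly R})%R <= 2)%N.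
  by apply: sB => //; rewrite size_poly1.
have sT : (size (2%:P * w * S + 'X * w * S^`() - m.+3%:R * 'X * S)%R <= m.+2)%N.
  apply: sB; first apply: sD.
  - by apply: leq_trans (sM (sM sC (sw 1%N)) sS) _.
  - by apply: leq_trans (sM (sM sX (sw 1%N)) (sDer sS)) _.
  - by apply: leq_trans (sM (sM (sn _) sX) sS) _.
apply: sB.
  apply: leq_trans (sM (sM sC (sM (sM (sw m) (sw m)) (sw 3%N))) (sD (sM sC sX) (leq_trans sC (_ : 1 <= 2)%N))) _ => //.
  lia.
apply: leq_trans (sM (sM sX1 (sM (sw m) (sw 2%N))) sT) _.
lia.
Qed.

Lemma X2_root (R : numFieldType) : ~~ root ('X^2 : {poly R}) 2.
Proof. by rewrite /root hornerXn expf_eq0 /= pnatr_eq0. Qed.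

Lemma X2_ev (R : numFieldType) : ('X^2 : {poly R}).[2] != 0.
Proof. by rewrite hornerXn expf_eq0 /= pnatr_eq0. Qed.

Lemma by_k2 (R : numFieldType) (x y k k2 u v : {poly R}) :
  u = v -> x - y = k * (2 * 2^-1 - 1 : R)%:P + k2 * (u - v) -> x = y.
Proof. by move=> ->; rewrite two_half subrr !mulr0 addr0 => /eqP; rewrite subr_eq0 => /eqP. Qed.

Lemma res_gen (R : numFieldType) (P : {poly R}) K :
  residue 2 (P, 'X^2 * ('X - 2%:P) ^+ K.+1) =
  (K`!%:R)^-1 * (let g := iter K (@rderiv R) (P, 'X^2) in g.1.[2] / g.2.[2]).
Proof.
rewrite /residue /= mupMr ?X2_root // mup_XsubCX eqxx /=.
by rewrite mulpK // expf_neq0 // polyXsubC_eq0.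
Qed.

Theorem lemma6p3 (R : numFieldType) (a : nat) (d : int) :
  (1 <= a)%N -> -1 <= d ->
  residue 2 (rmul (f_ R a) (rmul (1, 'X ^+ 2) (invpow_zm2 R d)))
  = (- 2^-1) ^ (a%:Z + d + 1).
Proof.
case: a => // a _ hd.
have [m [S [E sS]]] := fa_form R a.
rewrite E.
set c := (2 * (- 2^-1) ^+ a.+1 : R).
case: d hd => [n|n] hd.
  rewrite /rmul /=.
  have -> : ('X - 2%:P) ^+ m.+3 * ('X^2 * ('X - 2%:P) ^+ n) = 'X^2 * ('X - 2%:P) ^+ (m + n + 2).+1 :> {poly R}.
    by rewrite mulrCA -exprD; congr (_ * (_ ^+ _)); lia.
  rewrite !mulr1 res_gen.
  have [U [sU hU]] := U_ex R n.
  set t := c * (2^-1 * (- 2^-1) ^+ n.+1).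
  set V : {poly R} := S + c%:P * ('X - 2%:P) ^+ m.+1 * U.
  set Z : {poly R} := (c * (- 2^-1) ^+ n.+2)%:P * 'X.
  have Hp : c%:P * ('X * ('X - 2%:P) ^+ m.+1) + 'X^2 * S =
     'X^2 * (t%:P * ('X - 2%:P) ^+ (m + n + 2) + V) + ('X - 2%:P) ^+ (m + n + 2 + 1) * Z.
    rewrite /V /Z /t !exprD !exprS; rewrite !exprS in hU.
    apply: (@by_k2 _ _ _ (- ((c * (- 2^-1 * (- 2^-1) ^+ n))%:P * 'X * (('X - 2%:P) ^+ m * ('X - 2%:P) ^+ n * ('X - 2%:P) ^+ 2)))
       (- (c%:P * 'X * (('X - 2%:P) * ('X - 2%:P) ^+ m))) _ _ hU).
    ring.
  rewrite Hp.
  have := @final_eval R 2 t ('X^2) V Z (m + n + 2) (X2_ev R).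
  have sV : (size V <= m + n + 2)%N.
    apply: sD; first by apply: leq_trans sS _; lia.
    apply: leq_trans (sM (sM sC (_ : size (('X - 2%:P) ^+ m.+1 : {poly R}) <= m.+2)%N) sU) _.
      by rewrite size_exp_XsubC.
    lia.
  move=> /(_ sV) /= ->.
  rewrite mulrCA mulVf ?mulr1; last by rewrite pnatr_eq0 -lt0n fact_gt0.
  have -> : (a.+1%:Z + n%:Z + 1 = (a.+1 + n.+1)%N%:Z) by lia.
  rewrite -exprnP exprD /t /c.
  move: ((- 2^-1) ^+ a.+1) ((- 2^-1) ^+ n.+1) => Q1 Q2.
  by field.
case: n hd => [|n] hd; last by [].
rewrite /rmul /=.
have -> : ('X - 2%:P) ^+ m.+3 * ('X^2 * 1) = 'X^2 * ('X - 2%:P) ^+ (m.+2).+1 :> {poly R}.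
  by rewrite mulr1 mulrC.
rewrite res_gen.
set t := c * 2^-1.
set V : {poly R} := ('X - 2%:P) * S.
set Z : {poly R} := (- (c * 2^-1))%:P * 'X.
have Hp : (c%:P * ('X * ('X - 2%:P) ^+ m.+1) + 'X^2 * S) * (1 * ('X - 2%:P) ^+ 1) =
   'X^2 * (t%:P * ('X - 2%:P) ^+ m.+2 + V) + ('X - 2%:P) ^+ (m.+2 + 1) * Z.
  rewrite /V /Z /t addn1 !exprS.
  apply: (@by_k _ _ _ (- (c%:P * 'X * (('X - 2%:P) * (('X - 2%:P) * ('X - 2%:P) ^+ m))))).
  ring.
rewrite Hp.
have := @final_eval R 2 t ('X^2) V Z m.+2 (X2_ev R).
have sV : (size V <= m.+2)%N.
  have sw : (size ('X - 2%:P : {poly R})%R <= 2)%N by rewrite size_XsubC.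
  rewrite /V; apply: leq_trans (sM sw sS) _; lia.
move=> /(_ sV) /= ->.
rewrite mulrCA mulVf ?mulr1; last by rewrite pnatr_eq0 -lt0n fact_gt0.
have -> : (a.+1%:Z + Negz 0 + 1 = a.+1%N%:Z) by lia.
rewrite -exprnP /t /c.
move: ((- 2^-1) ^+ a.+1) => Q1.
by field.
Qed.
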